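(* Let $n$ be a positive integer, $x\in\Gamma_n$ and $z\in\{r,b\}^n$. Then \[ \tilde\xi_n(x,z)=\xi_n\bigl(\sigma_{\mathrm{RF}}(x)\bigr)-\mathrm{wt}_{G_x}(z). \]
   Context: Let $[n]=\{1,\dots,n\}$. $\Gamma_n$ is the set of words $x=(x_1,\dots,x_{2n})\in[n]^{2n}$ in which every symbol of $[n]$ occurs exactly twice. Colours are formal symbols $r,b$; $\neg$ swaps them, $\neg^0$ is the identity, $\neg^1=\neg$. $[\,\cdot\,]$ is the Iverson bracket. For $f\in\{r,b\}^{2n}$, $\xi_n(f)=\sum_{i=1}^{2n-1}[f_i\neq f_{i+1}]$. For $z\in\{r,b\}^n$, $\mathcal E_n(x,z)_i=\neg^{[x_i\in\{x_1,\dots,x_{i-1}\}]}z_{x_i}$ ($i\in[2n]$) and $\tilde\xi_n(x,z)=\xi_n(\mathcal E_n(x,z))$. The red-first colouring $\sigma_{\mathrm{RF}}(x)$ has $i$-th entry $r$ if $x_i\notin\{x_1,\dots,x_{i-1}\}$ and $b$ otherwise. For $i\in[2n-1]$, $\eta(x,i)=[x_{i+1}\in\{x_1,\dots,x_i\}]\oplus[x_i\in\{x_1,\dots,x_{i-1}\}]$. For $e\subseteq[n]$, $\theta_x(e)=-\sum_{i=1}^{2n-1}(-1)^{\eta(x,i)}\delta_{e,\{x_i,x_{i+1}\}}$. The BPSP graph $G_x=(V_x,E_x,W_x)$ has $V_x=[n]$, $E_x=\{\{x_i,x_{i+1}\}: i\in[2n-1],\ x_i\neq x_{i+1},\ \theta_x(\{x_i,x_{i+1}\})\neq0\}$,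 $W_x=\theta_x|_{E_x}$. $\mathrm{wt}_{G_x}(z)=\sum_{\{i,j\}\in E_x}W_x(\{i,j\})[z_i\neq z_j]$. *)

(* Defs.v *)
From HB Require Import structures.
From mathcomp Require Import all_boot all_order all_algebra.
Set Implicit Arguments. Unset Strict Implicit. Unset Printing Implicit Defensive.
Import Order.TTheory GRing.Theory Num.Theory.

Inductive colour := r | b.
Definition colour_eqb (c d : colour) : bool :=
  match c, d with r, r | b, b => true | _, _ => false end.
Lemma colour_eqP : Equality.axiom colour_eqb.
Proof. by case; case; constructor. Qed.
HB.instance Definition _ := hasDecEq.Build colour colour_eqP.

Definition cneg (c : colour) : colour := match c with r => b | b => r end.
Definition cnegp (e : bool) (c : colour) : colour := if e then cneg c else c.

(* Words are seq nat with symbols in [n] = {1,...,n}; positions are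
   0-indexed internally: position i of the paper is index i-1 here. *)
Definition Gamma (n : nat) (x : seq nat) : Prop :=
  size x = (2 * n)%N /\ all (fun k => 0 < k <= n) x /\
  (forall k, 0 < k <= n -> count_mem k x = 2%N).

(* z ∈ {r,b}^n ; z_k (1 <= k <= n) is the (k-1)-th entry of the tuple *)
Definition zat (n : nat) (z : n.-tuple colour) (k : nat) : colour := nth r z k.-1.

Definition xi (n : nat) (f : seq colour) : nat :=
  \sum_(0 <= i < (2 * n).-1) (nth r f i != nth r f i.+1).

Definition seen (x : seq nat) (i : nat) : bool := nth 0 x i \in take i x.

Definition Enc (n : nat) (x : seq nat) (z : n.-tuple colour) : seq colour :=
  mkseq (fun i => cnegp (seen x i) (zat z (nth 0 x i))) (2 * n).

Definition xi_tilde (n : nat) (x : seq nat) (z : n.-tuple colour) : nat :=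
  xi n (Enc x z).

Definition sigmaRF (n : nat) (x : seq nat) : seq colour :=
  mkseq (fun i => if seen x i then b else r) (2 * n).

Definition eta (x : seq nat) (i : nat) : bool := seen x i.+1 (+) seen x i.

Definition is_pair (x : seq nat) (i u v : nat) : bool :=
  ((u == nth 0 x i) && (v == nth 0 x i.+1)) ||
  ((u == nth 0 x i.+1) && (v == nth 0 x i)).

Definition theta (n : nat) (x : seq nat) (u v : nat) : int :=
  - \sum_(0 <= i < (2 * n).-1) ((-1) ^+ eta x i * (is_pair x i u v)%:R)%R.

Definition edgeb (n : nat) (x : seq nat) (u v : nat) : bool :=
  [&& u < v,
      [exists i : 'I_((2 * n).-1), (nth 0 x i != nth 0 x i.+1) && is_pair x i u v]
    & theta n x u v != 0%R].

(* wt_{G_x}(z) = sum_{{u,v} in E_x} W_x({u,v}) [z_u != z_v] ;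
   each unordered edge counted once via u < v, vertices in [n]. *)
Definition wt (n : nat) (x : seq nat) (z : n.-tuple colour) : int :=
  \sum_(1 <= u < n.+1) \sum_(1 <= v < n.+1 | edgeb n x u v)
     (theta n x u v * (zat z u != zat z v)%:R)%R.

(* Main.v *)
Require Import Defs.
From mathcomp Require Import all_boot all_order all_algebra zify.
Import GRing.Theory Num.Theory.
Local Open Scope ring_scope.

Lemma pair_min (p q u v : nat) : ((u < v)%N && (((u == p) && (v == q)) || ((u == q) && (v == p)))) = [&& u == minn p q, v == maxn p q & p != q].
Proof. apply/idP/idP; lia. Qed.

Lemma point (s1 s2 : bool) (c1 c2 : colour) :
  ((cnegp s1 c1 != cnegp s2 c2)%:Z = ((if s1 then b else r) != (if s2 then b else r))%:Z
    + (-1) ^+ (s2 (+) s1) * (c1 != c2)%:R)%R.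
Proof. by case: s1; case: s2; case: c1; case: c2. Qed.

Lemma theta0 n x (u v : nat) : (u < v)%N -> ~~ edgeb n x u v -> theta n x u v = 0.
Proof.
move=> uv; rewrite /edgeb uv /=.
case: (boolP [exists i : 'I_((2 * n).-1), (nth 0%N x i != nth 0%N x i.+1) && is_pair x i u v]) => /= [_|H].
  by move/negPn/eqP.
move=> _; rewrite /theta big_nat_cond big1 ?oppr0 // => i /andP[/andP[_ hi] _].
move/existsPn: H => /(_ (Ordinal hi)) /=.
case P: (is_pair x i u v); last by rewrite mulr0.
rewrite andbT negbK; move: P; rewrite /is_pair => P /eqP E.
move: P; rewrite E; case/orP=> /andP[/eqP a /eqP c]. all: have: u = v by rewrite a c. all: lia.
Qed.

Definition dd {n} (z : n.-tuple colour) (x : seq nat) i := (zat z (nth 0%N x i) != zat z (nth 0%N x i.+1)).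

Lemma wtE n x (z : n.-tuple colour) : Gamma n x ->
  wt x z = - \sum_(0 <= i < (2 * n).-1) ((-1) ^+ eta x i * (dd z x i)%:R).
Proof.
case=> [sz [hall _]].
have inr i : (i < 2 * n)%N -> (1 <= nth 0%N x i < n.+1)%N.
  move=> hi; have hs : (i < size x)%N by rewrite sz.
  have := allP hall (nth 0%N x i) (mem_nth 0%N hs); move=> /= ?; lia.
rewrite /wt.
transitivity (\sum_(1 <= u < n.+1) \sum_(1 <= v < n.+1)
   (if (u < v)%N then theta n x u v * (zat z u != zat z v)%:R else 0)).
  apply: eq_bigr => u _; rewrite big_mkcond; apply: eq_bigr => v _.
  case: (ltnP u v) => uv; case E: (edgeb n x u v) => //.
    by rewrite theta0 ?E // mul0r.
  by move: E; rewrite /edgeb ltnNge uv.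
pose G i u v := (((-1) : int) ^+ eta x i * (((u < v)%N && is_pair x i u v)%:R * (zat z u != zat z v)%:R)).
transitivity (\sum_(1 <= u < n.+1) \sum_(1 <= v < n.+1) - \sum_(0 <= i < (2 * n).-1) G i u v).
  apply: eq_bigr => u _; apply: eq_bigr => v _.
  case: (ltnP u v) => uv /=.
    rewrite /theta mulNr mulr_suml; congr (- _); apply: eq_bigr => i _.
    by rewrite /G uv /= mulrA.
  by rewrite big1 ?oppr0 // => i _; rewrite /G ltnNge uv /= mul0r mulr0.
transitivity (- \sum_(0 <= i < (2 * n).-1) \sum_(1 <= u < n.+1) \sum_(1 <= v < n.+1) G i u v).
  have E1 : \sum_(0 <= i < (2 * n).-1) \sum_(1 <= u < n.+1) \sum_(1 <= v < n.+1) G i u v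
     = \sum_(1 <= u < n.+1) \sum_(1 <= v < n.+1) \sum_(0 <= i < (2 * n).-1) G i u v.
    by rewrite exchange_big; apply: eq_bigr => u _; rewrite exchange_big.
  by rewrite E1 -sumrN; apply: eq_bigr => u _; rewrite -sumrN.
congr (- _); rewrite big_nat_cond [RHS]big_nat_cond; apply: eq_bigr => i /andP[/andP[_ hi] _].
set p := nth 0%N x i; set q := nth 0%N x i.+1.
have hp : (1 <= p < n.+1)%N by apply: inr; lia.
have hq : (1 <= q < n.+1)%N by apply: inr; lia.
transitivity (\sum_(1 <= u < n.+1) if u == minn p q then \sum_(1 <= v < n.+1)
   (if v == maxn p q then ((-1) : int) ^+ eta x i * ((p != q)%:R * (zat z u != zat z v)%:R) else 0) else 0).
  apply: eq_bigr => u _; case: eqP => eu.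
    apply: eq_bigr => v _; rewrite /G /is_pair -/p -/q pair_min eu eqxx /=; case: eqP => //= _.
    by rewrite mul0r mulr0.
  by rewrite big1 // => v _; rewrite /G /is_pair -/p -/q pair_min; move/eqP/negbTE: eu => ->; rewrite mul0r mulr0.
rewrite -big_mkcond big_nat1_eq /= ifT; last by lia.
rewrite -big_mkcond big_nat1_eq /= ifT; last by lia.
rewrite /dd -/p -/q; congr (_ * _).
case: (ltngtP p q) => h.
- by rewrite mul1r.
- by rewrite mul1r eq_sym.
- by rewrite h eqxx mul0r.
Qed.

Theorem proposition7 (n : nat) (x : seq nat) (z : n.-tuple colour) :
  (0 < n)%N -> Gamma n x ->
  ((xi_tilde x z)%:Z = (xi n (sigmaRF n x))%:Z - wt x z)%R.
Proof.
move=> _ G; rewrite wtE // opprK /xi_tilde /xi.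
rewrite !(big_morph Posz PoszD (erefl 0%:Z)) -big_split /=.
rewrite big_nat_cond [RHS]big_nat_cond; apply: eq_bigr => i /andP[/andP[_ hi] _].
have h1 : (i < 2 * n)%N by lia.
have h2 : (i.+1 < 2 * n)%N by lia.
by rewrite /Enc /sigmaRF !nth_mkseq // point.
Qed.
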